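(* Let $s$ be an aperiodic standard episturmian word over a finite alphabet, and let $k$ be the number of distinct letters occurring in $s$. Then there exists a coloring $c:\mathcal F^+ s\to\{0,1,\ldots,k\}$ of the non-empty factors of $s$ such that for every factorization $s=V_1V_2\cdots V_n\cdots$ of $s$ into non-empty factors $V_i$, there exist integers $i,j$ with $c(V_i)\neq c(V_j)$. (For instance, writing the letters of $s$ as $a_1,\ldots,a_k$: $c(V)=0$ if $V$ is not a prefix of $s$, and $c(V)=m$ if $V$ is a prefix of $s$ ending in $a_m$.)
   Context: An infinite word $s$ over a finite alphabet $A$ is standard episturmian if its set of factors is closed under reversal and every left special factor of $s$ is a prefix of $s$; here a factor $u$ is left special if there are distinct letters $x,y\in A$ with $xu$ and $yu$ both factors of $s$. Aperiodic means not ultimately periodic. $\mathcal F^+ s$ denotes the set of non-empty factors of $s$. *)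

(* Defs.v *)
From mathcomp Require Import all_boot.
Set Implicit Arguments. Unset Strict Implicit. Unset Printing Implicit Defensive.

Section Words.
Variable A : finType.

Definition factor_at (s : nat -> A) (i n : nat) : seq A := mkseq (fun j => s (i + j)) n.

Definition is_factor (s : nat -> A) (u : seq A) : Prop :=
  exists i, u = factor_at s i (size u).

Definition is_prefix (s : nat -> A) (u : seq A) : Prop :=
  u = factor_at s 0 (size u).

Definition left_special (s : nat -> A) (u : seq A) : Prop :=
  exists x y : A, x <> y /\ is_factor s (x :: u) /\ is_factor s (y :: u).

Definition standard_episturmian (s : nat -> A) : Prop :=
  (forall u, is_factor s u -> is_factor s (rev u)) /\
  (forall u, left_special s u -> is_prefix s u).

Definition ultimately_periodic (s : nat -> A) : Prop :=
  exists p N, 0 < p /\ forall n, N <= n -> s (n + p) = s n.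

Definition aperiodic (s : nat -> A) : Prop := ~ ultimately_periodic s.

(* starting position of the n-th block V n in the concatenation V 0 V 1 ... *)
Fixpoint cut_pos (V : nat -> seq A) (n : nat) : nat :=
  match n with 0 => 0 | n'.+1 => cut_pos V n' + size (V n') end.

Definition is_factorization (s : nat -> A) (V : nat -> seq A) : Prop :=
  (forall n, V n <> [::]) /\
  (forall n, V n = factor_at s (cut_pos V n) (size (V n))).

End Words.

(* Main.v *)
Require Import Defs.
From mathcomp Require Import all_boot.
From Stdlib Require Import Classical.
Set Implicit Arguments. Unset Strict Implicit. Unset Printing Implicit Defensive.

Section Basic.
Variable A : finType.
Implicit Types (s : nat -> A).

Lemma factor_atS s i n : factor_at s i n.+1 = s i :: factor_at s i.+1 n.
Proof.
apply: (@eq_from_nth _ (s 0)); first by rewrite /factor_at /= !size_map !size_iota.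
move=> [|j]; rewrite /factor_at size_mkseq => hj; first by rewrite nth_mkseq // addn0.
by rewrite /= (nth_map 0) ?size_iota // nth_iota // nth_mkseq // add1n addSnnS.
Qed.

Lemma size_factor_at s i n : size (factor_at s i n) = n.
Proof. by rewrite size_mkseq. Qed.

Lemma nth_factor_at s x0 i n j : j < n -> nth x0 (factor_at s i n) j = s (i + j).
Proof. by move=> h; rewrite nth_mkseq. Qed.

Lemma factor_at_eqP s i j n :
  factor_at s i n = factor_at s j n <-> (forall t, t < n -> s (i + t) = s (j + t)).
Proof.
split.
  move=> E t ht; have := congr1 (nth (s 0) ^~ t) E.
  by rewrite !nth_factor_at.
move=> H; apply: (@eq_from_nth _ (s 0)); rewrite ?size_factor_at // => t ht.
by rewrite !nth_factor_at // H.
Qed.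

Lemma factor_at_cat s i m n :
  factor_at s i (m + n) = factor_at s i m ++ factor_at s (i + m) n.
Proof.
elim: m i => [|m IH] i; first by rewrite add0n addn0.
by rewrite addSn !factor_atS IH addSnnS.
Qed.

Lemma factor_at_rcons s i n : factor_at s i n.+1 = rcons (factor_at s i n) (s (i + n)).
Proof. by rewrite -addn1 factor_at_cat -cats1 factor_atS. Qed.

End Basic.


Section Epi.
Variable A : finType.
Implicit Types (s : nat -> A).

Lemma factor_at_factor s i n : is_factor s (factor_at s i n).
Proof. by exists i; rewrite size_factor_at. Qed.

Lemma factor2 s (a b : A) : is_factor s [:: a; b] <-> exists k, s k = a /\ s k.+1 = b.
Proof.
split.
  by case=> k; rewrite /= !factor_atS => -[-> ->]; exists k.
by case=> k [<- <-]; exists k; rewrite /= !factor_atS.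
Qed.

Lemma uniq_left s u c d : standard_episturmian s -> ~ is_prefix s u ->
  is_factor s (c :: u) -> is_factor s (d :: u) -> c = d.
Proof.
move=> [_ HLS] np hc hd; case: (eqVneq c d) => // cd.
by exfalso; apply: np; apply: HLS; exists c, d; split => //; apply/eqP.
Qed.

Lemma periodic_from s i (c d : A) : (forall t, s (i + t) = if odd t then d else c) ->
  ultimately_periodic s.
Proof.
move=> H; exists 2, i; split => // n hn.
have -> : n = i + (n - i) by rewrite subnKC.
by rewrite -addnA !H addn2 /= negbK.
Qed.

Lemma one_prefix s d : is_prefix s [:: d] -> d = s 0.
Proof. by rewrite /is_prefix /= factor_atS => -[]. Qed.

Lemma factY s : standard_episturmian s -> aperiodic s ->
  forall i, s i != s 0 -> s i.+1 = s 0.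
Proof.
move=> E ap i; set c := s i => hc; case: (eqVneq (s i.+1) (s 0)) => // hd.
exfalso; set d := s i.+1 in hd.
have npd : ~ is_prefix s [:: d] by move/one_prefix => h; rewrite h eqxx in hd.
have npc : ~ is_prefix s [:: c] by move/one_prefix => h; rewrite h eqxx in hc.
have Fcd : is_factor s [:: c; d] by apply/factor2; exists i.
have [k0 [k0d k0c]] : exists k, s k = d /\ s k.+1 = c.
  by apply/factor2; exact: E.1 _ Fcd.
have L1 : forall j, s j.+1 = d -> s j = c.
  move=> j hj; apply: (uniq_left E npd) => //; apply/factor2; by exists j.
have L2 : forall j, s j.+1 = c -> s j = d.
  move=> j hj; apply: (uniq_left E npc); apply/factor2; [by exists j | by exists k0].
have R1 : forall j, s j = d -> s j.+1 = c.
  move=> j hj; have : is_factor s [:: s j.+1; d].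
    by apply: (E.1 [:: d; s j.+1]); apply/factor2; exists j.
  by case/factor2 => k [hk1 hk2]; rewrite -hk1; apply: L1.
have R2 : forall j, s j = c -> s j.+1 = d.
  move=> j hj; have : is_factor s [:: s j.+1; c].
    by apply: (E.1 [:: c; s j.+1]); apply/factor2; exists j.
  by case/factor2 => k [hk1 hk2]; rewrite -hk1; apply: L2.
apply: ap; apply: (@periodic_from s i c d) => t; elim: t => [|t IH]; first by rewrite addn0.
rewrite addnS /=; case: (odd t) IH => /= IH; [exact: R1 | exact: R2].
Qed.

Lemma base_case s (b : A) i : standard_episturmian s -> aperiodic s ->
  s 0 != b -> s i = b -> s i.+1 = b -> False.
Proof.
move=> E ap hb h1 h2.
have npb : ~ is_prefix s [:: b] by move/one_prefix => h; rewrite h eqxx in hb.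
have L1 : forall j, s j.+1 = b -> s j = b.
  move=> j hj; apply: (uniq_left E npb); apply/factor2; [by exists j | by exists i].
have R1 : forall j, s j = b -> s j.+1 = b.
  move=> j hj; have : is_factor s [:: s j.+1; b].
    by apply: (E.1 [:: b; s j.+1]); apply/factor2; exists j.
  by case/factor2 => k [hk1 hk2]; rewrite -hk1; apply: L1.
apply: ap; apply: (@periodic_from s i b b) => t; rewrite if_same; elim: t => [|t IH]; first by rewrite addn0.
by rewrite addnS; apply: R1.
Qed.

End Epi.


Section Phi.
Variable A : finType.
Variable y : A.

Definition phi1 (c : A) : seq A := if c == y then [:: y] else [:: y; c].
Definition phi2 (c : A) : seq A := if c == y then [:: y] else [:: c; y].
Fixpoint phi (u : seq A) : seq A := if u is c :: u' then phi1 c ++ phi u' else [::].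
Fixpoint phi' (u : seq A) : seq A := if u is c :: u' then phi2 c ++ phi' u' else [::].

Lemma phi_cat u v : phi (u ++ v) = phi u ++ phi v.
Proof. by elim: u => //= c u ->; rewrite catA. Qed.

Lemma phi_y u : phi u ++ [:: y] = y :: phi' u.
Proof.
elim: u => //= c u IH; rewrite -catA IH /phi1 /phi2; by case: eqP.
Qed.

Lemma rev_phi' u : rev (phi' u) = phi (rev u).
Proof.
elim: u => //= c u IH; rewrite rev_cat IH rev_cons -cats1 phi_cat /= cats0.
by congr (_ ++ _); rewrite /phi1 /phi2; case: eqP.
Qed.

Lemma rev_phi u : rev (phi u ++ [:: y]) = phi (rev u) ++ [:: y].
Proof. by rewrite phi_y rev_cons rev_phi' cats1. Qed.

Lemma size_phi1 c : size (phi1 c) = if c == y then 1 else 2.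
Proof. by rewrite /phi1; case: eqP. Qed.

Lemma size_phi_ge u : size u <= size (phi u).
Proof. by elim: u => //= c u IH; rewrite size_cat size_phi1; case: eqP => _; rewrite ?add1n ?add2n ltnS // ltnW. Qed.

Lemma head_phi u : nth y (phi u ++ [:: y]) 0 = y.
Proof. by case: u => //= c u; rewrite /phi1; case: eqP. Qed.

End Phi.

Lemma cat_inj (T : eqType) (s1 s2 t1 t2 : seq T) :
  size s1 = size t1 -> s1 ++ s2 = t1 ++ t2 -> s1 = t1 /\ s2 = t2.
Proof. by move=> h /eqP; rewrite eqseq_cat // => /andP[/eqP -> /eqP ->]. Qed.


Section Desub.
Variable A : finType.
Variable s : nat -> A.
Hypothesis HY : forall i, s i != s 0 -> s i.+1 = s 0.
Notation y := (s 0).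

Fixpoint g (k : nat) : nat :=
  if k is k'.+1 then (if s (g k').+1 == y then (g k').+1 else (g k').+2) else 0.
Definition s' (k : nat) : A := s (g k).+1.

Lemma g_y k : s (g k) = y.
Proof.
elim: k => //= k IH; case: eqP => // /eqP h; exact: HY.
Qed.

Lemma gS k : g k.+1 = g k + size (phi1 y (s' k)).
Proof. by rewrite /= size_phi1 /s'; case: eqP => _; rewrite ?addn1 ?addn2. Qed.

Lemma g_lt k : g k < g k.+1.
Proof. by rewrite gS size_phi1; case: eqP => _; rewrite ?addn1 ?addn2. Qed.

Lemma g_homo : {homo g : k l / k < l}.
Proof. apply: homo_ltn; [exact: ltn_trans | exact: g_lt]. Qed.

Lemma g_inj : injective g.
Proof.
move=> k l e; case: (ltngtP k l) => // h; move: (g_homo h); by rewrite e ltnn.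
Qed.

Lemma g_ge k : k <= g k.
Proof. by elim: k => // k IH; apply: leq_ltn_trans IH (g_lt k). Qed.

Lemma g_bracket i : exists k, g k <= i < g k.+1.
Proof.
elim: i => [|i [k /andP[h1 h2]]]; first by exists 0; apply/andP; split; [done | exact: (g_lt 0)].
case: (ltnP i.+1 (g k.+1)) => h3; first by exists k; rewrite h3 ltnW.
exists k.+1; have e : g k.+1 = i.+1 by apply/eqP; rewrite eqn_leq h3.
by rewrite e leqnn -e g_lt.
Qed.

Lemma g_onto i : s i = y -> exists k, g k = i.
Proof.
move=> hi; case: (g_bracket i) => k /andP[h1 h2].
case: (ltngtP (g k) i) h1 => // h3 _; last by exists k.
exfalso; move: h2; rewrite /= ; case: eqP => e h2.
  by move: (leq_trans h2 h3); rewrite ltnn.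
have e2 : i = (g k).+1 by apply/eqP; rewrite eqn_leq -ltnS h2 h3.
by apply: e; rewrite -e2.
Qed.

Lemma s'_prev k : s (g k.+1).-1 = s' k.
Proof. by rewrite /= /s'; case: eqP => //= ->; rewrite g_y. Qed.

Lemma phi1_at k : factor_at s (g k) (size (phi1 y (s' k))) = phi1 y (s' k).
Proof.
Proof. rewrite /s' /phi1; case: (eqVneq (s (g k).+1) (s 0)) => [e|ne] /=; rewrite ?e ?eqxx ?(negbTE ne) /= !factor_atS g_y // e. Qed.

Lemma conv m k : g (k + m) = g k + size (phi y (factor_at s' k m)) /\
  factor_at s (g k) (size (phi y (factor_at s' k m))).+1 = phi y (factor_at s' k m) ++ [:: y].
Proof.
elim: m k => [|m IH] k.
  by rewrite addn0 addn0 /= factor_atS g_y.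
rewrite factor_atS /= size_cat; have [IH1 IH2] := IH k.+1.
split; first by rewrite addnS -addSn IH1 gS addnA.
by rewrite -addnS factor_at_cat phi1_at -gS IH2 catA.
Qed.

Lemma trans u k : factor_at s (g k) (size (phi y u)).+1 = phi y u ++ [:: y] ->
  factor_at s' k (size u) = u /\ g (k + size u) = g k + size (phi y u).
Proof.
elim: u k => [|c u IH] k /=; first by rewrite !addn0.
rewrite size_cat => H.
have sk : s' k = c.
  have := congr1 (nth y ^~ 1) H; rewrite nth_factor_at; last by rewrite size_phi1; case: eqP.
  rewrite addn1 -/(s' k) -catA /phi1; case: eqP => [->|_] //= ->.
  exact: head_phi.
rewrite -addnS factor_at_cat -catA in H.
have [_ H2] := cat_inj (size_factor_at _ _ _) H.
rewrite -sk -gS in H2; have [IH1 IH2] := IH _ H2.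
by rewrite factor_atS IH1 sk addnS -addSn IH2 gS sk addnA.
Qed.

Lemma trans_inj u v k : factor_at s (g k) (size (phi y u)).+1 = phi y u ++ [:: y] ->
  phi y u ++ [:: y] = phi y v ++ [:: y] -> u = v.
Proof.
move=> Hu Huv.
have Hs : size (phi y u) = size (phi y v) by have := congr1 size Huv; rewrite !size_cat /= !addn1 => -[].
have Hv : factor_at s (g k) (size (phi y v)).+1 = phi y v ++ [:: y] by rewrite -Hs Hu.
have [U1 U2] := trans Hu; have [V1 V2] := trans Hv.
have : size u = size v by apply/eqP; rewrite -(inj_eq (@addnI k)) -(inj_eq g_inj) U2 V2 Hs.
by move=> e; rewrite -U1 -V1 e.
Qed.

End Desub.


Section Props.
Variable A : finType.
Variable s : nat -> A.
Hypothesis E : standard_episturmian s.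
Hypothesis ap : aperiodic s.
Notation y := (s 0).
Let HY := factY E ap.
Notation g := (g s).
Notation s' := (s' s).

Lemma head_y u j : phi y u ++ [:: y] = factor_at s j (size (phi y u)).+1 -> s j = y.
Proof.
move=> H; have := congr1 (nth y ^~ 0) H; rewrite nth_factor_at // addn0 => <-.
exact: head_phi.
Qed.

Lemma s'_rev u : is_factor s' u -> is_factor s' (rev u).
Proof.
case=> k Hk; have [_ C2] := conv HY (size u) k; rewrite -Hk in C2.
have F : is_factor s (phi y u ++ [:: y]) by rewrite -C2; apply: factor_at_factor.
have := E.1 _ F; rewrite rev_phi => -[j Hj].
rewrite size_cat addn1 in Hj.
have [k' Hk'] := g_onto (head_y Hj); rewrite -Hk' in Hj.
have [T1 _] := trans (esym Hj); by exists k'; rewrite T1.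
Qed.

Lemma s'_LS u : left_special s' u -> is_prefix s' u.
Proof.
have key : forall c, is_factor s' (c :: u) -> is_factor s (c :: (phi y u ++ [:: y])).
  move=> c [k Hk]; rewrite /= factor_atS in Hk; case: Hk => Hc Hk.
  have [_ C2] := conv HY (size u) k.+1; rewrite -Hk in C2.
  have pos : 0 < g k.+1 by apply: leq_ltn_trans (g_lt s k).
  by exists (g k.+1).-1; rewrite /= size_cat addn1 factor_atS prednK // C2 (s'_prev HY) -Hc.
case=> c [d [cd [Fc Fd]]].
have : is_prefix s (phi y u ++ [:: y]) by apply: E.2; exists c, d; split => //; split; apply: key.
rewrite /is_prefix size_cat addn1 => P.
have [T1 _] := trans (u := u) (k := 0) (esym P).
by rewrite /is_prefix T1.
Qed.

Lemma s'_epi : standard_episturmian s'.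
Proof. split; [exact: s'_rev | exact: s'_LS]. Qed.

Lemma g_le k l : k <= l -> g k <= g l.
Proof. by move=> h; apply: (homo_leq (f := g) leqnn leq_trans (fun k => ltnW (g_lt s k))). Qed.

Lemma g_step k : g k.+1 <= (g k).+2.
Proof. by rewrite gS size_phi1; case: eqP => _; rewrite ?addn1 ?addn2. Qed.

Lemma s'_aper : aperiodic s'.
Proof.
move=> [p [N [p0 Hp]]]; apply: ap.
set P := g (N + p) - g N.
have G : forall t, g (N + t + p) = g (N + t) + P.
  elim=> [|t IH]; first by rewrite addn0 /P subnKC // g_le // leq_addr.
  have e1 : N + t.+1 + p = (N + t + p).+1 by rewrite addnS addSn.
  by rewrite e1 addnS (gS _ (N + t + p)) (gS _ (N + t)) IH Hp ?leq_addr // addnAC.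
have P0 : 0 < P by rewrite subn_gt0; apply: (homo_ltn ltn_trans (g_lt s)); rewrite -{1}(addn0 N) ltn_add2l.
exists P, (g N); split => // i hi.
have [k /andP[h1 h2]] := g_bracket s i.
have kN : N <= k.
  rewrite leqNgt; apply/negP => kN; have := g_le kN; move=> h3.
  by move: (leq_trans h3 hi); rewrite leqNgt h2.
have Gk : g (k + p) = g k + P by rewrite -(subnKC kN) G.
have := g_step k; rewrite leq_eqVlt ltnS => /orP[/eqP e|h4].
- have : i = g k \/ i = (g k).+1.
    move: h2; rewrite e ltnS leq_eqVlt ltnS => /orP[/eqP ->|h5]; [by right|left].
    by apply/eqP; rewrite eqn_leq h1 h5.
  case=> ->; first by rewrite -Gk !g_y.
  by rewrite addSn -Gk -/(s' (k + p)) Hp.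
- have -> : i = g k by apply/eqP; rewrite eqn_leq h1 -ltnS (leq_trans h2 h4).
  by rewrite -Gk !g_y.
Qed.

End Props.


Definition Cfg (A : finType) (s : nat -> A) n b :=
  exists i, s i = b /\ factor_at s i.+1 n = factor_at s 0 n /\ s (i.+1 + n) = b.

Theorem noCfg (A : finType) : forall n (s : nat -> A) b,
  standard_episturmian s -> aperiodic s -> rev (factor_at s 0 n) = factor_at s 0 n ->
  s n != b -> Cfg s n b -> False.
Proof.
move=> n0; elim: n0.+1 {-2}n0 (ltnSn n0) => // N IH [|n] ltnN s b E ap Hrev hb [i [hi [F hib]]].
  by rewrite addn0 in hib; exact: (base_case (i := i) E ap hb hi hib).
have HY := factY E ap.
set w := factor_at s 0 n.+1 in Hrev F.
have yn : s n = s 0.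
  have := congr1 (nth (s 0) ^~ n) Hrev.
  rewrite nth_rev size_factor_at // subSS subnn !nth_factor_at // => <-.
have [k gk] := g_onto yn.
have [C1 C2] := conv HY k 0.
set w' := factor_at (s' s) 0 k in C1 C2.
rewrite /= add0n in C1 C2; rewrite gk in C1.
have Ew : w = phi (s 0) w' ++ [:: s 0] by rewrite /w C1 C2.
have kn : k < n.+1 by rewrite ltnS -gk; apply: g_ge.
have Huv : phi (s 0) (rev w') ++ [:: s 0] = phi (s 0) w' ++ [:: s 0] by rewrite -rev_phi -Ew.
have Hpal : rev w' = w'.
  apply: (trans_inj (k := 0) _ Huv).
  have -> : size (phi (s 0) (rev w')) = size (phi (s 0) w').
    by have := congr1 size Huv; rewrite !size_cat /= !addn1 => -[].
  by rewrite Huv /= -C2.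
have sk : s' s k = s n.+1 by rewrite /s' gk.
have [i' [gi' si']] : exists i', g s i'.+1 = i.+1 /\ s' s i' = b.
  case: (eqVneq b (s 0)) => [eb|nb].
  - have [i' e] := g_onto (etrans hi eb); exists i'.
    have h0 : s i.+1 = s 0 by have := congr1 (nth (s 0) ^~ 0) F; rewrite /w !nth_factor_at // addn0.
    by rewrite /= /s' e h0 eqxx eb.
  - have i0 : i != 0 by apply/eqP => e; move: nb; rewrite -hi e eqxx.
    have hp : s i.-1 = s 0.
      case: (eqVneq (s i.-1) (s 0)) => // h; have := HY _ h; rewrite prednK ?lt0n //.
      by rewrite hi => e; rewrite e eqxx in nb.
    have [i' e] := g_onto hp; exists i'.
    by rewrite /= /s' e prednK ?lt0n // hi (negbTE nb).
have [T1 T2] : factor_at (s' s) i'.+1 (size w') = w' /\ g s (i'.+1 + size w') = g s i'.+1 + size (phi (s 0) w').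
  apply: trans.
  by rewrite gi' -Ew -F C1.
apply: (IH k _ (s' s) b (s'_epi E ap) (s'_aper E ap)).
- by apply: leq_trans kn _.
- by rewrite -/w'.
- by rewrite sk.
exists i'; split => //; split; first by rewrite -{1}(size_factor_at (s' s) 0 k) T1.
by rewrite /s' -{1}(size_factor_at (s' s) 0 k) T2 gi' add0n in C1 *; rewrite -C1 -addnS.
Qed.

From mathcomp Require Import zify.

Lemma bracket (f : nat -> nat) : f 0 = 0 -> (forall k, f k < f k.+1) ->
  forall i, exists k, f k <= i < f k.+1.
Proof.
move=> f0 fS; elim=> [|i [k /andP[h1 h2]]]; first by exists 0; have := fS 0; rewrite f0.
case: (ltnP i.+1 (f k.+1)) => h3; first by exists k; rewrite h3 ltnW.
exists k.+1; have e : f k.+1 = i.+1 by apply/eqP; rewrite eqn_leq h3.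
by rewrite e leqnn -e fS.
Qed.

Lemma no_mono_fact (A : finType) (s : nat -> A) (Vs : nat -> seq A) (a : A) :
  standard_episturmian s -> aperiodic s -> is_factorization s Vs ->
  (forall n, Vs n = factor_at s 0 (size (Vs n))) ->
  (forall n, s (cut_pos Vs n.+1).-1 = a) -> False.
Proof.
move=> E ap [ne Fz] Hpre Hlast.
set p := cut_pos Vs.
have pS : forall n, p n.+1 = p n + size (Vs n) by [].
have szp : forall n, 0 < size (Vs n) by move=> n; case: (Vs n) (ne n) => //.
have pinc : forall n, p n < p n.+1 by move=> n; rewrite pS -{1}(addn0 (p n)) ltn_add2l szp.
have blk : forall n t, t < size (Vs n) -> s (p n + t) = s t.
  move=> n t ht; have := Fz n; rewrite {1}Hpre => /factor_at_eqP/(_ t ht).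
  by rewrite add0n.
set P := p 1.
have P0 : 0 < P by apply: (pinc 0).
have [L0 hL0] : exists L, s (P + L) != s L.
  apply: NNPP => H; apply: ap; exists P, 0; split => // n _.
  case: (eqVneq (s (n + P)) (s n)) => // h; exfalso; apply: H; exists n; by rewrite addnC.
case: (ex_minnP (ex_intro (fun L => s (P + L) != s L) L0 hL0)) => L hL minL.
have agree : forall t, t < L -> s (P + t) = s t.
  move=> t ht; case: (eqVneq (s (P + t)) (s t)) => // h.
  by have := minL t h; rewrite leqNgt ht.
set w := factor_at s 0 L.
have wP : factor_at s P L = w by apply/factor_at_eqP => t ht; rewrite add0n agree.
have Hpal : rev w = w.
  have F1 : is_factor s (s L :: rev w).
    rewrite -rev_rcons; apply: E.1; exists 0; by rewrite size_rcons size_factor_at factor_at_rcons.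
  have F2 : is_factor s (s (P + L) :: rev w).
    rewrite -rev_rcons; apply: E.1; exists P; by rewrite size_rcons size_factor_at -wP factor_at_rcons.
  have : is_prefix s (rev w).
    apply: E.2; exists (s L), (s (P + L)); split => //; by apply/eqP; rewrite eq_sym.
  by rewrite /is_prefix size_rev size_factor_at.
have [m /andP[m1 m2]] := bracket (f := p) erefl pinc (P + L).
have m2' : 1 < m.
  case: m m1 m2 => [|[|m]] // m1 m2.
  - by move: (leq_ltn_trans (leq_addr L P) m2); rewrite ltnn.
  - exfalso; move: m2; rewrite pS -/P ltn_add2l => m2.
    by move: hL; rewrite blk // eqxx.
have pmP : P < p m.
  by apply: (homo_ltn ltn_trans pinc).
set d := p m - P.
have d0 : 0 < d by rewrite subn_gt0.
have dL : d <= L by rewrite leq_subLR.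
have ez : s (P + L) = s (L - d).
  have e : P + L = p m + (L - d) by rewrite /d; lia.
  rewrite e blk //; rewrite -(ltn_add2l (p m)) -e -pS; exact: m2.
have ea : s (L - d) = a.
  have e1 : (p m).-1 = P + d.-1 by rewrite /d; lia.
  have hd : d.-1 < L by lia.
  have pal : s d.-1 = s (L - d).
    have := congr1 (nth (s 0) ^~ d.-1) Hpal.
    rewrite nth_rev ?size_factor_at // !nth_factor_at ?add0n //; last by lia.
    by move=> <-; congr (s _); lia.
  have hm : s (p m).-1 = a.
    have m0 : 0 < m by lia.
    by rewrite -(prednK m0); exact: Hlast.
  by rewrite -pal -agree // -e1.
apply: (@noCfg A L s a E ap Hpal).
- by rewrite -ea -ez eq_sym.
- exists P.-1; rewrite prednK //; split; first by rewrite -(Hlast 0).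
  by split; [exact: wP | rewrite ez].
Qed.

Unset Implicit Arguments.

Theorem mainTheorem10 (A : finType) (s : nat -> A) (B : {set A}) :
  standard_episturmian s -> aperiodic s ->
  (forall a : A, a \in B <-> exists n, s n = a) ->
  exists c : seq A -> nat,
    (forall V, is_factor s V -> V <> [::] -> c V <= #|B|) /\
    (forall Vs : nat -> seq A, is_factorization s Vs ->
       exists i j, c (Vs i) <> c (Vs j)).
Proof.
move=> E ap HB.
pose c (V : seq A) := if (V == factor_at s 0 (size V)) && (V != [::])
  then (index (last (s 0) V) (enum B)).+1 else 0.
have lastF : forall i n, last (s 0) (factor_at s i n.+1) = s (i + n).
  by move=> i n; rewrite factor_at_rcons last_rcons.
have inB : forall i n, last (s 0) (factor_at s i n.+1) \in B.
  by move=> i n; rewrite lastF; apply/HB; exists (i + n).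
exists c; split.
  move=> V [i Hi] nV; rewrite /c; case: ifP => // _.
  case: (size V) Hi => [|n] Hi; first by move: nV; rewrite Hi; case: (V) => //.
  by rewrite Hi cardE index_mem mem_enum.
move=> Vs HF; apply: NNPP => H.
have eqc : forall n, c (Vs n) = c (Vs 0).
  move=> n; case: (eqVneq (c (Vs n)) (c (Vs 0))) => // h; exfalso; apply: H.
  by exists n, 0; apply/eqP.
have [ne Fz] := HF.
have pre0 : Vs 0 = factor_at s 0 (size (Vs 0)) by rewrite {1}(Fz 0).
have c0 : c (Vs 0) = (index (last (s 0) (Vs 0)) (enum B)).+1.
  by rewrite /c -pre0 eqxx; case: (Vs 0) (ne 0).
have Hpre : forall n, Vs n = factor_at s 0 (size (Vs n)).
  move=> n; have := eqc n; rewrite c0 /c; case: ifP => // /andP[/eqP -> _] _.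
  by rewrite size_factor_at.
have lastB : forall n, last (s 0) (Vs n) \in enum B.
  move=> n; rewrite mem_enum; have sz : 0 < size (Vs n) by case: (Vs n) (ne n).
  rewrite (Hpre n) -(prednK sz); exact: inB.
have Hlast : forall n, last (s 0) (Vs n) = last (s 0) (Vs 0).
  move=> n; have := eqc n; rewrite c0 /c; case: ifP => // _ [] e.
  by rewrite -(nth_index (s 0) (lastB n)) e nth_index.
apply: (no_mono_fact E ap HF Hpre (a := last (s 0) (Vs 0))) => n.
have sz : 0 < size (Vs n) by case: (Vs n) (ne n).
rewrite -(Hlast n) [in RHS](Fz n) -(prednK sz) lastF /=; congr (s _); lia.
Qed.
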